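(* Assume the setting in the context and that Conditions (T), (M), (D), (S) and (G) all hold. (a) If $\widetilde{\operatorname{Tr}}^\Omega_{\mathcal{X}}\widehat{\mathbf{S}}^L_\Omega:\mathcal{N}_{\mathcal{X}}\to\mathcal{D}_{\mathcal{X}}$ is one-to-one, then for each $f\in\mathcal{D}_{\mathcal{X}}$ there is at most one $u\in\mathcal{X}^\Omega$ with $(\widehat Lu)|_\Omega=0$ and $\widetilde{\operatorname{Tr}}^\Omega_{\mathcal{X}}u=f$. If there is a constant $C_0$ with $\|g\|_{\mathcal{N}_{\mathcal{X}}}\le C_0\|\widetilde{\operatorname{Tr}}^\Omega_{\mathcal{X}}\widehat{\mathbf{S}}^L_\Omega g\|_{\mathcal{D}_{\mathcal{X}}}$ for all $g\in\mathcal{N}_{\mathcal{X}}$, then there is a constant $C_1$ such that every $u\in\mathcal{X}^\Omega$ with $(\widehat Lu)|_\Omega=0$ satisfies $\|u\|_{\mathcal{X}^\Omega}\le C_1\|\widetilde{\operatorname{Tr}}^\Omega_{\mathcal{X}}u\|_{\mathcal{D}_{\mathcal{X}}}$. (b) If $\widehat{\mathbf{M}}^\Omega_B\widehat{\mathbf{D}}^B_\Omega:\mathcal{D}_{\mathcal{X}}\to\mathcal{N}_{\mathcal{X}}$ is one-to-one, then for each $g\in\mathcal{N}_{\mathcal{X}}$ there is at most one $u\in\mathcal{X}^\Omega$ with $(\widehat Lu)|_\Omega=0$ and $\widehat{\mathbf{M}}^\Omega_Bu=g$. If there is a constant $C_0$ with $\|f\|_{\mathcal{D}_{\mathcal{X}}}\le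 C_0\|\widehat{\mathbf{M}}^\Omega_B\widehat{\mathbf{D}}^B_\Omega f\|_{\mathcal{N}_{\mathcal{X}}}$ for all $f\in\mathcal{D}_{\mathcal{X}}$, then there is a constant $C_1$ such that every $u\in\mathcal{X}^\Omega$ with $(\widehat Lu)|_\Omega=0$ satisfies $\|u\|_{\mathcal{X}^\Omega}\le C_1\|\widehat{\mathbf{M}}^\Omega_Bu\|_{\mathcal{N}_{\mathcal{X}}}$.
   Context: Let $\mathcal{X}^\Omega$, $\mathcal{D}_{\mathcal{X}}$, $\mathcal{N}_{\mathcal{X}}$ be quasi-Banach spaces. Let $u\mapsto(\widehat Lu)|_\Omega$ be a linear operator on $\mathcal{X}^\Omega$ (with values in some vector space), and let $\mathcal{K}^\Omega=\{u\in\mathcal{X}^\Omega:(\widehat Lu)|_\Omega=0\}$. Let $\widetilde{\operatorname{Tr}}^\Omega_{\mathcal{X}}:\mathcal{K}^\Omega\to\mathcal{D}_{\mathcal{X}}$, $\widehat{\mathbf{M}}^\Omega_B:\mathcal{K}^\Omega\to\mathcal{N}_{\mathcal{X}}$, $\widehat{\mathbf{D}}^B_\Omega:\mathcal{D}_{\mathcal{X}}\to\mathcal{X}^\Omega$ and $\widehat{\mathbf{S}}^L_\Omega:\mathcal{N}_{\mathcal{X}}\to\mathcal{X}^\Omega$ be linear operators. Conditions: (T) $\widetilde{\operatorname{Tr}}^\Omega_{\mathcal{X}}$ is bounded $\mathcal{K}^\Omega\to\mathcal{D}_{\mathcal{X}}$ (with the $\mathcal X^\Omega$ quasi-norm on $\mathcal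 K^\Omega$); (M) $\widehat{\mathbf{M}}^\Omega_B$ is bounded $\mathcal{K}^\Omega\to\mathcal{N}_{\mathcal{X}}$; (S) $\widehat{\mathbf{S}}^L_\Omega$ is bounded $\mathcal{N}_{\mathcal{X}}\to\mathcal{X}^\Omega$ and $\widehat{\mathbf{S}}^L_\Omega g\in\mathcal{K}^\Omega$ for all $g\in\mathcal{N}_{\mathcal{X}}$; (D) $\widehat{\mathbf{D}}^B_\Omega$ is bounded $\mathcal{D}_{\mathcal{X}}\to\mathcal{X}^\Omega$ and $\widehat{\mathbf{D}}^B_\Omega f\in\mathcal{K}^\Omega$ for all $f\in\mathcal{D}_{\mathcal{X}}$; (G) every $u\in\mathcal{K}^\Omega$ satisfies $u=-\widehat{\mathbf{D}}^B_\Omega(\widetilde{\operatorname{Tr}}^\Omega_{\mathcal{X}}u)+\widehat{\mathbf{S}}^L_\Omega(\widehat{\mathbf{M}}^\Omega_Bu)$. *)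

(* Defs.v *)
From HB Require Import structures.
From mathcomp Require Import all_boot all_order all_algebra.
From mathcomp Require Import reals.
Set Implicit Arguments. Unset Strict Implicit. Unset Printing Implicit Defensive.
Import Order.TTheory GRing.Theory Num.Theory.
Local Open Scope ring_scope.

Definition quasi_norm (R : realType) (V : lmodType R) (q : V -> R) : Prop :=
  [/\ (forall v, 0 <= q v),
      (forall v, q v = 0 -> v = 0),
      (forall (a : R) v, q (a *: v) = `|a| * q v)
    & exists K : R, 1 <= K /\ forall u v, q (u + v) <= K * (q u + q v)].

Definition qn_complete (R : realType) (V : lmodType R) (q : V -> R) : Prop :=
  forall u : nat -> V,
    (forall e : R, 0 < e -> exists N : nat, forall m n : nat,
        (N <= m)%N -> (N <= n)%N -> q (u m - u n) < e) ->
    exists l : V, forall e : R, 0 < e -> exists N : nat, forall n : nat,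
        (N <= n)%N -> q (u n - l) < e.

Definition quasi_banach (R : realType) (V : lmodType R) (q : V -> R) : Prop :=
  quasi_norm q /\ qn_complete q.

Definition linear_on (R : realType) (V W : lmodType R) (P : V -> Prop)
  (T : V -> W) : Prop :=
  forall (a : R) u v, P u -> P v -> T (a *: u + v) = a *: T u + T v.

Definition bounded_on (R : realType) (V W : lmodType R) (qV : V -> R)
  (qW : W -> R) (P : V -> Prop) (T : V -> W) : Prop :=
  exists C : R, forall u, P u -> qW (T u) <= C * qV u.

(* Main.v *)
Require Import Defs.
From HB Require Import structures.
From mathcomp Require Import all_boot all_order all_algebra.
From mathcomp Require Import reals.
Import Order.TTheory GRing.Theory Num.Theory.
Local Open Scope ring_scope.
From mathcomp Require Import ring.

Lemma chain (R:realType) (KX CD CS C0 KD CT q a b d n e g : R) : 0<=KX -> 0<=CD -> 0<=CS -> 0<=C0 -> 0<=KD -> 0<=CT ->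
 q <= KX*(a+b) -> a <= CD*d -> b <= CS*n -> n <= C0*e -> e <= KD*(d+g) -> g <= CT*a ->
 q <= KX*(CD + CS*(C0*(KD*(1+CT*CD))))*d.
Proof.
move=> p1 p2 p3 p4 p5 p6 hq ha hb hn he hg.
have h2 : g <= CT*(CD*d) := le_trans hg (ler_wpM2l p6 ha).
have h3 : e <= KD*(d + CT*(CD*d)) := le_trans he (ler_wpM2l p5 (lerD (lexx d) h2)).
have h4 : n <= C0*(KD*(d + CT*(CD*d))) := le_trans hn (ler_wpM2l p4 h3).
have h5 : b <= CS*(C0*(KD*(d + CT*(CD*d)))) := le_trans hb (ler_wpM2l p3 h4).
apply: (le_trans hq); apply: le_trans (ler_wpM2l p1 (lerD ha h5)) _.
by rewrite le_eqVlt; apply/orP; left; apply/eqP; ring.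
Qed.

Lemma bpos (R : realType) (V W : lmodType R) (qV : V -> R) (qW : W -> R) P T :
  (forall v, 0 <= qV v) -> bounded_on qV qW P T ->
  exists C, 0 <= C /\ forall u, P u -> qW (T u) <= C * qV u.
Proof.
move=> q0 [C hC]; exists `|C|; split => // u Pu; apply: le_trans (hC u Pu) _.
by apply: ler_wpM2r; [apply: q0 | apply: ler_norm].
Qed.

Lemma lin_sub (R : realType) (V W : lmodType R) (P : V -> Prop) (T : V -> W) u v :
  linear_on P T -> P u -> P v -> T (- u + v) = - T u + T v.
Proof. by move=> hl pu pv; rewrite -scaleN1r hl // scaleN1r. Qed.

Lemma lin_add (R : realType) (V W : lmodType R) (P : V -> Prop) (T : V -> W) u v :
  linear_on P T -> P u -> P v -> T (u + v) = T u + T v.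
Proof. by move=> hl pu pv; rewrite -[u]scale1r hl // !scale1r. Qed.

Arguments lin_sub {R V W P T u v}.
Arguments lin_add {R V W P T u v}.
Arguments bpos {R V W qV qW P T}.

Theorem theorem6p2 (R : realType) (X D N W : lmodType R)
  (qX : X -> R) (qD : D -> R) (qN : N -> R)
  (hX : quasi_banach qX) (hD : quasi_banach qD) (hN : quasi_banach qN)
  (Lh : X -> W) (hL : linear_on (fun _ => True) Lh)
  (Tr : X -> D) (M : X -> N) (Dop : D -> X) (Sop : N -> X)
  (hTrlin : linear_on (fun u => Lh u = 0) Tr)
  (hMlin : linear_on (fun u => Lh u = 0) M)
  (hDlin : linear_on (fun _ => True) Dop)
  (hSlin : linear_on (fun _ => True) Sop)
  (* (T) *) (hT : bounded_on qX qD (fun u => Lh u = 0) Tr)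
  (* (M) *) (hM : bounded_on qX qN (fun u => Lh u = 0) M)
  (* (S) *) (hS : bounded_on qN qX (fun _ => True) Sop /\
                  forall g, Lh (Sop g) = 0)
  (* (D) *) (hD' : bounded_on qD qX (fun _ => True) Dop /\
                  forall f, Lh (Dop f) = 0)
  (* (G) *) (hG : forall u, Lh u = 0 -> u = - Dop (Tr u) + Sop (M u)) :
  (* (a) *)
  ((injective (fun g => Tr (Sop g)) ->
     forall (f : D) (u1 u2 : X), Lh u1 = 0 -> Lh u2 = 0 ->
       Tr u1 = f -> Tr u2 = f -> u1 = u2) /\
   ((exists C0 : R, forall g, qN g <= C0 * qD (Tr (Sop g))) ->
     exists C1 : R, forall u, Lh u = 0 -> qX u <= C1 * qD (Tr u))) /\
  (* (b) *)
  ((injective (fun f => M (Dop f)) ->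
     forall (g : N) (u1 u2 : X), Lh u1 = 0 -> Lh u2 = 0 ->
       M u1 = g -> M u2 = g -> u1 = u2) /\
   ((exists C0 : R, forall f, qD f <= C0 * qN (M (Dop f))) ->
     exists C1 : R, forall u, Lh u = 0 -> qX u <= C1 * qN (M u))).
Proof.
move: hX hD hN => [[X0 _ Xh [KX [KX1 Xt]]] _] [[D0 _ Dh [KD [KD1 Dt]]] _] [[N0 _ Nh [KN [KN1 Nt]]] _].
have KX0 : 0 <= KX by apply: le_trans KX1; rewrite ler01.
have KD0 : 0 <= KD by apply: le_trans KD1; rewrite ler01.
have KN0 : 0 <= KN by apply: le_trans KN1; rewrite ler01.
case: hS => hSb hSk; case: hD' => hDb hDk.
have hMb := hM.
have [CT [CT0 hT']] := bpos X0 hT.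
have [CM [CM0 hM']] := bpos X0 hMb.
have [CS [CS0 hS']] := bpos N0 hSb.
have [CD [CD0 hD']] := bpos D0 hDb.
have qXN : forall x, qX (- x) = qX x.
  by move=> x; rewrite -scaleN1r Xh normrN1 mul1r.
have qNN : forall x, qN (- x) = qN x.
  by move=> x; rewrite -scaleN1r Nh normrN1 mul1r.
have eTr : forall f g, Tr (- Dop f + Sop g) = - Tr (Dop f) + Tr (Sop g).
  by move=> f g; apply: (lin_sub hTrlin); [apply: hDk | apply: hSk].
have eM : forall f g, M (- Dop f + Sop g) = - M (Dop f) + M (Sop g).
  by move=> f g; apply: (lin_sub hMlin); [apply: hDk | apply: hSk].
split; split.
- move=> inj f u1 u2 k1 k2 e1 e2.
  have h1 := hG _ k1; have h2 := hG _ k2.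
  have : Tr (Sop (M u1)) = Tr (Sop (M u2)).
    have := eTr (Tr u1) (M u1); rewrite -h1 e1 => E1.
    have := eTr (Tr u2) (M u2); rewrite -h2 e2 => E2.
    by move: (etrans (esym E1) E2) => /addrI.
  by move/inj => EM; rewrite h1 h2 EM e1 e2.
- move=> [C0' hC0].
  have [C0 [C00 hC]] : exists C0, 0 <= C0 /\ forall g, qN g <= C0 * qD (Tr (Sop g)).
    exists `|C0'|; split => // g; apply: le_trans (hC0 g) _.
    by apply: ler_wpM2r; [apply: D0 | apply: ler_norm].
  exists (KX*(CD + CS*(C0*(KD*(1+CT*CD))))) => u ku.
  have Eu := hG _ ku.
  have ETS : Tr (Sop (M u)) = Tr u + Tr (Dop (Tr u)).
    rewrite -(lin_add hTrlin ku (hDk _)); congr Tr.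
    move: Eu; set t := Tr u; set m := M u => Eu.
    by rewrite {1}Eu addrC addNKr.
  apply: (@chain _ KX CD CS C0 KD CT _ (qX (Dop (Tr u))) (qX (Sop (M u))) _
     (qN (M u)) (qD (Tr (Sop (M u)))) (qD (Tr (Dop (Tr u)))) KX0 CD0 CS0 C00 KD0 CT0).
  + by rewrite {1}Eu; apply: le_trans (Xt _ _) _; rewrite qXN.
  + exact: hD'.
  + exact: hS'.
  + exact: hC.
  + by rewrite ETS; apply: Dt.
  + exact: hT'.
- move=> inj g u1 u2 k1 k2 e1 e2.
  have h1 := hG _ k1; have h2 := hG _ k2.
  have : M (Dop (Tr u1)) = M (Dop (Tr u2)).
    have := eM (Tr u1) (M u1); rewrite -h1 e1 => E1.
    have := eM (Tr u2) (M u2); rewrite -h2 e2 => E2.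
    by move: (etrans (esym E1) E2) => /addIr /oppr_inj.
  by move/inj => ET; rewrite h1 h2 ET e1 e2.
- move=> [C0' hC0].
  have [C0 [C00 hC]] : exists C0, 0 <= C0 /\ forall f, qD f <= C0 * qN (M (Dop f)).
    exists `|C0'|; split => // f; apply: le_trans (hC0 f) _.
    by apply: ler_wpM2r; [apply: N0 | apply: ler_norm].
  exists (KX*(CS + CD*(C0*(KN*(1+CM*CS))))) => u ku.
  have Eu := hG _ ku.
  have EMD : M (Dop (Tr u)) = - M u + M (Sop (M u)).
    rewrite -(lin_sub hMlin ku (hSk _)); congr M.
    move: Eu; set t := Tr u; set m := M u => Eu.
    by rewrite {1}Eu opprD opprK addrNK.
  apply: (@chain _ KX CS CD C0 KN CM _ (qX (Sop (M u))) (qX (Dop (Tr u))) _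
     (qD (Tr u)) (qN (M (Dop (Tr u)))) (qN (M (Sop (M u)))) KX0 CS0 CD0 C00 KN0 CM0).
  + by rewrite {1}Eu addrC; apply: le_trans (Xt _ _) _; rewrite qXN.
  + exact: hS'.
  + exact: hD'.
  + exact: hC.
  + rewrite EMD; apply: le_trans (Nt _ _) _.
    by rewrite qNN.
  + exact: hM'.
Qed.
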